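(* Let $T>0$ and $\epsilon>0$, and let $\mathcal{R}$ consist of $M$ independently generated random RR sets. For any node $u$ with $I_u\ge T$, with probability at least $1-\exp\!\left(-\frac{M\epsilon^2 n}{8T}\right)$ we have $n\,\mathcal{F_R}(u)\ge T-\frac{\epsilon n}{2}$.
   Context: $G=\langle V,E,w\rangle$ is a network with $n=|V|$ under the Linear Threshold or Independent Cascade model (given by its live-edge distribution: LT — each node $v$ independently selects at most one incoming live edge, $(u,v)$ with probability $w_{uv}/W_v$ where $W_v=w_v+\sum_{u}w_{uv}$ includes a self-weight $w_v$; IC — each edge $(u,v)$ is live independently with probability $w_{uv}$). The influence spread $I(S)$ is the expected number of nodes reachable from $S$ via live edges, and $I_u=I(\{u\})$. A random RR set is the set of nodes that can reach a uniformly random node $v\in V$ via live edges in a freshly sampled live-edge graph. $\mathcal{F_R}(u)$ is the fraction of RR sets in $\mathcal{R}$ that contain $u$. *)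

(* Defs.v *)
From HB Require Import structures.
From mathcomp Require Import all_boot all_order all_algebra.
From mathcomp Require Import all_classical all_reals all_analysis.
Set Implicit Arguments. Unset Strict Implicit. Unset Printing Implicit Defensive.
Import Order.TTheory GRing.Theory Num.Theory.
Local Open Scope ring_scope.

Section LiveEdge.
Variables (R : realType) (V : finType).

(* A live-edge model: a finite sample space Om of live-edge outcomes with a
   probability mass function P, and for each outcome the live-edge relation
   (live om x y  <=>  edge (x,y) is live). *)
Variables (Om : finType) (P : Om -> R) (live : Om -> rel V).

Definition reached (om : Om) (S : {set V}) : {set V} :=
  [set v | [exists s in S, connect (live om) s v]].

Definition influence (S : {set V}) : R :=
  \sum_(om : Om) P om * (#|reached om S|)%:R.

Definition influence1 (u : V) : R := influence [set u].

Definition RRset (om : Om) (v : V) : {set V} :=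
  [set x | connect (live om) x v].

(* M independent random RR sets: each sample is an independent pair
   (uniform root v, fresh live-edge outcome om). *)
Definition sample_prob (M : nat) (s : {ffun 'I_M -> V * Om}) : R :=
  \prod_(i < M) ((#|V|%:R)^-1 * P (s i).2).

Definition frac (M : nat) (u : V) (s : {ffun 'I_M -> V * Om}) : R :=
  (#|[set i : 'I_M | u \in RRset (s i).2 (s i).1]|)%:R / M%:R.

Definition prob_samples (M : nat) (E : pred {ffun 'I_M -> V * Om}) : R :=
  \sum_(s | E s) sample_prob s.

Definition rr_lower_tail_claim (T eps : R) (M : nat) (u : V) : Prop :=
  T <= influence1 u ->
  1 - expR (- ((M%:R * eps ^+ 2 * (#|V|)%:R) / (8 * T)))
    <= prob_samples
         (fun s : {ffun 'I_M -> V * Om} =>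
            T - eps * (#|V|)%:R / 2 <= (#|V|)%:R * frac u s).

End LiveEdge.

Section Models.
Variables (R : realType) (V : finType).

(* Independent Cascade: each (u,v) live independently with prob w u v
   (non-edges have weight 0). Outcome = set of live pairs. *)
Definition IC_space := {ffun (V * V)%type -> bool}.
Definition IC_prob (w : V -> V -> R) (L : IC_space) : R :=
  \prod_(e : (V * V)%type) (if L e then w e.1 e.2 else 1 - w e.1 e.2).
Definition IC_live (L : IC_space) : rel V := fun x y => L (x, y).

(* Linear Threshold (live-edge form): each node v independently selects at
   most one incoming live edge: (u,v) w.p. w u v / W v, none w.p. wself v / W v,
   with W v = wself v + sum_u w u v. *)
Definition LT_space := {ffun V -> option V}.
Definition LT_W (w : V -> V -> R) (wself : V -> R) (v : V) : R :=
  wself v + \sum_(x : V) w x v.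
Definition LT_prob (w : V -> V -> R) (wself : V -> R) (c : LT_space) : R :=
  \prod_(v : V) (match c v with
                 | Some x => w x v / LT_W w wself v
                 | None => wself v / LT_W w wself v
                 end).
Definition LT_live (c : LT_space) : rel V := fun x y => c y == Some x.

End Models.

(* Main.v *)
Require Import Defs.
From HB Require Import structures.
From mathcomp Require Import all_boot all_order all_algebra.
From mathcomp Require Import all_classical all_reals all_analysis.
From mathcomp Require Import ring lra.
Import Order.TTheory GRing.Theory Num.Theory.
Local Open Scope ring_scope.

Lemma expR_quad {R : realType} (x : R) : 0 <= x -> 1 + x + x ^+ 2 / 2 <= expR x.
Proof.
move=> x0.
pose f : R -> R := (@expR R - id - (fun y => 2^-1 * y) * id)%R.
have df : forall y : R, is_derive y 1 f (expR y - 1 - y).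
  move=> y; rewrite /f; apply: is_derive_eq.
  change (expR y - 1 - (2^-1 * y * 1 + y * (2^-1 * 1)) = expR y - 1 - y).
  by field.
have := @ger0_derive1_ndecr R f 0 x.
have fE z : f z = expR z - z - z ^+ 2 / 2 by rewrite /f; change (expR z - z - 2^-1 * z * z = expR z - z - z ^+ 2 / 2); rewrite expr2; field.
move=> H.
have : f 0 <= f x.
  apply: H => //.
  - move=> z _; rewrite derive1E derive_val.
    have := expR_ge1Dx z; lra.
  - apply: derivable_within_continuous => z _.
    by case: (df z).
rewrite !fE expR0; lra.
Qed.

Lemma expN_bound (R : realType) (lam : R) : 0 <= lam ->
  expR (- lam) - 1 <= - lam + lam ^+ 2 / 2.
Proof.
move=> l0; rewrite expRN.
have h := expR_quad lam l0.
set e := expR lam in h *.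
have e0 : 0 < e by rewrite /e expR_gt0.
have ei : e * e^-1 = 1 by rewrite mulfV // gt_eqF.
have i0 : 0 < e^-1 by rewrite invr_gt0.
set i := e^-1 in ei i0 *.
have c0 : 0 < 1 - lam + lam ^+ 2 / 2 by nra.
nra.
Qed.

Section Generic.
Variables (R : realType) (V Om : finType) (P : Om -> R) (live : Om -> rel V).
Hypothesis P_ge0 : forall om, 0 <= P om.
Hypothesis P_sum : \sum_om P om = 1.
Variable u : V.

Let n : R := (#|V|)%:R.
Let q (x : V * Om) : R := n^-1 * P x.2.
Let Yb (x : V * Om) : bool := u \in RRset live x.2 x.1.
Let Y (x : V * Om) : R := (Yb x)%:R.

Lemma n_gt0 : 0 < n.
Proof. by rewrite /n ltr0n; apply/card_gt0P; exists u. Qed.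

Lemma q_ge0 x : 0 <= q x.
Proof. by rewrite /q mulr_ge0 // invr_ge0 ltW // n_gt0. Qed.

Lemma sum_q : \sum_x q x = 1.
Proof.
rewrite /q -(pair_bigA _ (fun (v : V) (om : Om) => n^-1 * P om)) /=.
under eq_bigr do rewrite -mulr_sumr P_sum mulr1.
rewrite sumr_const.
change (n^-1 *+ #|V| = 1).
by rewrite -mulr_natr -/n mulVf // gt_eqF // n_gt0.
Qed.

Lemma total_prob M : \sum_(s : {ffun 'I_M -> V * Om}) sample_prob P s = 1.
Proof.
rewrite /sample_prob -(bigA_distr_bigA (fun (i : 'I_M) (x : V * Om) => q x)).
by under eq_bigr do rewrite sum_q; rewrite prodr_const expr1n.
Qed.

Lemma reached_card om :
  (#|reached live om [set u]|)%:R = \sum_v ((u \in RRset live om v))%:R :> R.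
Proof.
rewrite -sum1_card natr_sum big_mkcond /=; apply: eq_bigr => v _.
rewrite /reached /RRset !inE.
have -> : [exists s0 in [set u], connect (live om) s0 v] = connect (live om) u v.
  apply/existsP/idP => [[s0 /andP[/set1P -> h]] // | h].
  by exists u; rewrite set11 h.
by case: (connect _ u v).
Qed.

Lemma p_eq : \sum_x q x * Y x = influence1 P live u / n.
Proof.
rewrite /influence1 /influence.
rewrite /q /Y /Yb -(pair_bigA _ (fun (v : V) (om : Om) => n^-1 * P om * ((u \in RRset live om v))%:R)) /=.
rewrite exchange_big /= mulr_suml; apply: eq_bigr => om _.
rewrite reached_card mulr_sumr mulr_suml; apply: eq_bigr => v _.
by rewrite [RHS]mulrC mulrA.
Qed.


Lemma cnt_eq M (s : {ffun 'I_M -> V * Om}) :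
  (#|[set i : 'I_M | u \in RRset live (s i).2 (s i).1]|)%:R = \sum_i Y (s i).
Proof.
rewrite -sum1_card natr_sum big_mkcond /=; apply: eq_bigr => i _.
by rewrite inE /Y /Yb; case: (u \in _).
Qed.

Lemma factor_eq (lam t : R) :
  \sum_x q x * expR (lam * t - lam * Y x)
  = expR (lam * t) * (1 + (\sum_x q x * Y x) * (expR (- lam) - 1)).
Proof.
have pt x : q x * expR (lam * t - lam * Y x)
    = expR (lam * t) * (q x + q x * Y x * (expR (- lam) - 1)).
  rewrite /Y; case: (Yb x) => /=.
    by rewrite mulr1 expRD; ring.
  by rewrite mulr0 subr0; ring.
under eq_bigr do rewrite pt.
by rewrite -mulr_sumr big_split /= sum_q -mulr_suml.
Qed.


Lemma generic (T eps : R) (M : nat) :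
  0 < T -> 0 < eps -> (0 < M)%N -> rr_lower_tail_claim P live T eps M u.
Proof.
move=> T0 e0 M0 hI; rewrite /prob_samples.
have n0 := n_gt0.
have M0' : 0 < (M%:R : R) by rewrite ltr0n.
set p := \sum_x q x * Y x.
have pE : p = influence1 P live u / n by rewrite /p p_eq.
have pT : T / n <= p by rewrite pE ler_pM2r ?invr_gt0.
set E := (fun s : {ffun 'I_M -> V * Om} =>
            T - eps * (#|V|)%:R / 2 <= (#|V|)%:R * Defs.frac R live u s).
set F := @sample_prob R V Om P M.
set B := expR _.
have tot := total_prob M.
rewrite (bigID E) /= -/F in tot.
have -> : \sum_(s | E s) F s = 1 - \sum_(s | ~~ E s) F s by rewrite -tot addrK.
rewrite lerD2l lerN2.
set t := T / n - eps / 2.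
have Fge0 s : 0 <= F s by rewrite /F /sample_prob prodr_ge0 // => i _; exact: q_ge0.
have fail s : ~~ E s -> \sum_i Y (s i) < M%:R * t.
  rewrite /E -ltNge /Defs.frac cnt_eq -/n => h.
  have h2 : n * ((\sum_i Y (s i)) / M%:R) < n * t.
    have nt : n * t = T - eps * n / 2.
      by rewrite /t; field; rewrite gt_eqF.
    by rewrite nt.
  by rewrite ltr_pM2l // ltr_pdivrMr // mulrC in h2.
have Yge0 x : 0 <= Y x by rewrite /Y ler0n.
case: (lerP t 0) => ht.
  rewrite big1 ?ltW ?expR_gt0 // => s /fail.
  have : 0 <= \sum_i Y (s i) by rewrite sumr_ge0.
  have : M%:R * t <= 0 by rewrite pmulr_rle0.
  lra.
set lam := eps * n / (2 * T).
have lam0 : 0 < lam by rewrite /lam divr_gt0 ?mulr_gt0.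
have lamt : lam * (T / n) = eps / 2 by rewrite /lam; field; rewrite !gt_eqF.
have lam1 : lam < 1.
  have : eps / 2 < T / n by rewrite /t subr_gt0 in ht.
  rewrite -lamt => h.
  have Tn0 : 0 < T / n by rewrite divr_gt0.
  nra.
set G := fun x : V * Om => q x * expR (lam * t - lam * Y x).
have step1 : \sum_(s | ~~ E s) F s
    <= \sum_s F s * expR (lam * (M%:R * t - \sum_i Y (s i))).
  rewrite [X in _ <= X](bigID E) /=; apply: ler_wpDl.
    by apply: sumr_ge0 => s _; rewrite mulr_ge0 ?expR_ge0.
  apply: ler_sum => s hs; rewrite -[X in X <= _]mulr1 ler_wpM2l //.
  rewrite -[leLHS]expR0 ler_expR; apply: mulr_ge0; first exact: ltW.
  by rewrite subr_ge0; apply: ltW; exact: fail.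
have step2 (s : {ffun 'I_M -> V * Om}) : F s * expR (lam * (M%:R * t - \sum_i Y (s i)))
    = \prod_i G (s i).
  rewrite /G big_split /=; congr (_ * _).
  rewrite -expR_sum; congr expR.
  rewrite sumrB sumr_const card_ord -mulr_sumr mulrBr.
  by rewrite mulr_natl mulrnAr.
have step3 : \sum_(s : {ffun 'I_M -> V * Om}) \prod_i G (s i) = (\sum_x G x) ^+ M.
  by rewrite -(bigA_distr_bigA (fun (i : 'I_M) x => G x)) prodr_const card_ord.
set z := lam * t + p * (- lam + lam ^+ 2 / 2).
have p0 : 0 <= p by apply: le_trans pT; rewrite divr_ge0 ?ltW.
have step4 : \sum_x G x <= expR z.
  rewrite /G factor_eq -/p /z expRD ler_wpM2l ?expR_ge0 //.
  apply: le_trans (expR_ge1Dx _) _.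
  by rewrite ler_expR ler_wpM2l // expN_bound // ltW.
have G0 : 0 <= \sum_x G x by apply: sumr_ge0 => x _; rewrite mulr_ge0 ?q_ge0 ?expR_ge0.
have step5 : z <= - (eps ^+ 2 * n / (8 * T)).
  have key : z + eps ^+ 2 * n / (8 * T) = lam * (1 - lam / 2) * (T / n - p).
    rewrite /z /t -lamt /lam; field; rewrite !gt_eqF //.
  have : 0 <= lam * (1 - lam / 2) by rewrite mulr_ge0 ?ltW //; lra.
  nra.
apply: (le_trans step1).
under eq_bigr do rewrite step2.
rewrite step3 /B.
apply: le_trans (lerXn2r M _ _ step4) _; rewrite ?nnegrE ?expR_ge0 //.
rewrite -expRM_natl ler_expR.
have -> : - (M%:R * eps ^+ 2 * n / (8 * T)) = M%:R * - (eps ^+ 2 * n / (8 * T)).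
  by rewrite mulrN !mulrA.
by rewrite ler_pM2l.
Qed.

End Generic.


Lemma IC_ok (R : realType) (V : finType) (w : V -> V -> R) :
  (forall x y, 0 <= w x y <= 1) ->
  (forall L, 0 <= IC_prob w L) /\ \sum_L IC_prob w L = 1.
Proof.
move=> hw; split.
  move=> L; rewrite /IC_prob prodr_ge0 // => e _.
  by case: (L e); have := hw e.1 e.2; case/andP => a b //; rewrite subr_ge0.
rewrite /IC_prob.
rewrite -(bigA_distr_bigA (fun (e : (V * V)%type) (b : bool) =>
            if b then w e.1 e.2 else 1 - w e.1 e.2)) /=.
rewrite big1 // => e _; rewrite big_bool /=; ring.
Qed.

Lemma LT_ok (R : realType) (V : finType) (w : V -> V -> R) (wself : V -> R) :
  (forall x y, 0 <= w x y) -> (forall v, 0 <= wself v) ->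
  (forall v, 0 < LT_W w wself v) ->
  (forall c, 0 <= LT_prob w wself c) /\ \sum_c LT_prob w wself c = 1.
Proof.
move=> hw hs hW; split.
  move=> c; rewrite /LT_prob prodr_ge0 // => v _.
  by case: (c v) => [x|]; rewrite divr_ge0 // ltW.
rewrite /LT_prob.
rewrite -(bigA_distr_bigA (fun (v : V) (o : option V) =>
            match o with
            | Some x => w x v / LT_W w wself v
            | None => wself v / LT_W w wself v
            end)) /=.
rewrite big1 // => v _.
rewrite (bigD1 None) //=.
rewrite (reindex_omap Some id (P := fun o => o != None)); last first.
  by case.
rewrite /= (eq_bigl xpredT); last by move=> x; rewrite eqxx.
rewrite -mulr_suml -mulrDl.
have := hW v; rewrite /LT_W => h.
by rewrite mulfV // gt_eqF.
Qed.

Theorem lemma5p1 (R : realType) (V : finType) (w : V -> V -> R) (wself : V -> R)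
    (T eps : R) (M : nat) (u : V) :
  0 < T -> 0 < eps -> (0 < M)%N ->
  ((forall x y, 0 <= w x y <= 1) ->
     rr_lower_tail_claim (IC_prob w) (@IC_live V) T eps M u) /\
  ((forall x y, 0 <= w x y) -> (forall v, 0 <= wself v) ->
   (forall v, 0 < LT_W w wself v) ->
     rr_lower_tail_claim (LT_prob w wself) (@LT_live V) T eps M u).
Proof.
move=> T0 e0 M0; split.
  move=> hw; have [h1 h2] := @IC_ok R V w hw.
  exact: (@generic R _ _ _ _ h1 h2 u T eps M T0 e0 M0).
move=> hw hs hW; have [h1 h2] := @LT_ok R V w wself hw hs hW.
exact: (@generic R _ _ _ _ h1 h2 u T eps M T0 e0 M0).
Qed.
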